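(* Suppose a deterministic algorithm $A$, given $n$ elements, guarantees that after $m$ comparisons it can list $r$ elements, each of which is guaranteed to be $k$-greater than at least $q$ elements. Then $m = \Omega\left(\max\{q^{1+1/(2^k-1)},\, q\cdot r^{1/2^{k-1}}\}\right)$, with an absolute implied constant.
   Context: Model of imprecise comparisons: there are $n$ elements, each with a fixed unknown real value; we identify an element with its value. Asked to compare $x_i$ and $x_j$, the comparator answers either ''$x_i \ge x_j$'' or ''$x_j \ge x_i$''. If $|x_i-x_j|>1$ the answer is correct; if $|x_i-x_j|\le 1$ the answer is arbitrary (possibly adversarial and adaptive). An element $x$ is $k$-greater than $y$ if $x \ge y - k$. ''Guaranteed'' means the property holds for every assignment of values and every comparator behaviour consistent with the answers received. *)

(* Defs.v *)
From HB Require Import structures.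
From mathcomp Require Import all_boot all_order all_algebra.
From mathcomp Require Import reals exp.
Set Implicit Arguments. Unset Strict Implicit. Unset Printing Implicit Defensive.
Import Order.TTheory GRing.Theory Num.Theory.
Local Open Scope ring_scope.

(* A deterministic comparison algorithm on n elements (indexed by 'I_n) is a
   decision tree.  [CNode i j t1 t2] asks the comparator to compare x_i and x_j;
   the algorithm continues with [t1] if the answer is "x_i >= x_j" and with
   [t2] if the answer is "x_j >= x_i".  [CLeaf out] stops and lists [out]. *)
Inductive ctree (n : nat) : Type :=
  | CLeaf of seq 'I_n
  | CNode of 'I_n & 'I_n & ctree n & ctree n.

Fixpoint depth n (t : ctree n) : nat :=
  match t with
  | CLeaf _ => 0%N
  | CNode _ _ t1 t2 => (maxn (depth t1) (depth t2)).+1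
  end.

(* An answer "x_a >= x_b" is recorded as the pair (a, b).  It is consistent
   with the values x iff it is not a wrong answer on a pair at distance > 1,
   i.e. iff x_b - x_a <= 1. *)
Definition consistent (R : realType) n (x : 'I_n -> R)
    (hist : seq ('I_n * 'I_n)) : Prop :=
  forall p, p \in hist -> x p.2 - x p.1 <= 1.

Definition kgreater (R : realType) (k : nat) (xe xy : R) : bool :=
  xy - k%:R <= xe.

Definition nb_kdominated (R : realType) n (x : 'I_n -> R) (k : nat) (e : 'I_n)
  : nat := #|[set y : 'I_n | (y != e) && kgreater k (x e) (x y)]|.

Fixpoint guarantees (R : realType) n (r q k : nat) (t : ctree n)
    (hist : seq ('I_n * 'I_n)) : Prop :=
  match t with
  | CLeaf out =>
      forall x : 'I_n -> R, consistent x hist ->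
        [/\ size out = r, uniq out &
            forall e, e \in out -> (q <= nb_kdominated x k e)%N]
  | CNode i j t1 t2 =>
      guarantees R r q k t1 ((i, j) :: hist) /\
      guarantees R r q k t2 ((j, i) :: hist)
  end.

(* Main.v *)
Require Import Defs.
From HB Require Import structures.
From mathcomp Require Import all_boot all_order all_algebra.
From mathcomp Require Import reals exp.
From mathcomp Require Import ring lra zify.
Set Implicit Arguments. Unset Strict Implicit. Unset Printing Implicit Defensive.
Import Order.TTheory GRing.Theory Num.Theory.

Section Comb.
Local Open Scope ring_scope.
Variable n : nat.
Implicit Types (h : seq ('I_n * 'I_n)).

Definition deg h (v : 'I_n) : nat := count (fun p => (p.1 == v) || (p.2 == v)) h.

Fixpoint good h : bool :=
  if h is p :: h' then (deg h' p.1 <= deg h' p.2)%N && good h' else true.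

Lemma adversary (R : realType) r q k (t : ctree n) hist :
  good hist -> guarantees R r q k t hist ->
  exists out h, [/\ good h, (size h <= depth t + size hist)%N &
    forall x : 'I_n -> R, consistent x h ->
      [/\ size out = r, uniq out &
          forall e, e \in out -> (q <= nb_kdominated x k e)%N]].
Proof.
elim: t hist => [out|i j t1 IH1 t2 IH2] hist ghist /=.
  by move=> G; exists out, hist; split.
case=> G1 G2.
case: (leqP (deg hist i) (deg hist j)) => Hij.
  have g1 : good ((i,j)::hist) by rewrite /= Hij ghist.
  have [out [h [gh sh Hh]]] := IH1 _ g1 G1.
  exists out, h; split => //; apply: leq_trans sh _.
  by rewrite /= addnS ltnS leq_add2r leq_maxl.
have g2 : good ((j,i)::hist) by rewrite /= (ltnW Hij) ghist.
have [out [h [gh sh Hh]]] := IH2 _ g2 G2.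
exists out, h; split => //; apply: leq_trans sh _.
by rewrite /= addnS ltnS leq_add2r leq_maxr.
Qed.

Variable h : seq ('I_n * 'I_n).

Fixpoint ball (e : 'I_n) (j : nat) : {set 'I_n} :=
  if j is j'.+1 then ball e j' :|: [set b | [exists a in ball e j', (a, b) \in h]]
  else [set e].

Lemma ball_le e i j : (i <= j)%N -> ball e i \subset ball e j.
Proof.
move=> /subnK <-; elim: (j - i)%N => [|d IH] //=.
by apply: subset_trans IH (subsetUl _ _).
Qed.

Lemma ball_e e j : e \in ball e j.
Proof. by apply: (subsetP (ball_le e (leq0n j))); rewrite /= set11. Qed.

Lemma ball_step e j a b : (a, b) \in h -> a \in ball e j -> b \in ball e j.+1.
Proof.
move=> ab aj; rewrite /= in_setU; apply/orP; right; rewrite inE.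
by apply/existsP; exists a; rewrite aj ab.
Qed.

Definition X (e : 'I_n) (k : nat) (v : 'I_n) : nat := \sum_(j < k.+1) (v \notin ball e j).

Lemma X_edge e k a b : (a, b) \in h -> (X e k b <= (X e k a).+1)%N.
Proof.
move=> ab; rewrite /X big_ord_recl big_ord_recr /= -add1n.
apply: leq_add; first by case: (_ \notin _).
apply: leq_trans (leq_addr _ _); apply: leq_sum => j _.
case: (boolP (a \in ball e j)) => aj /=; last by case: (_ \notin _).
by rewrite /bump /= (ball_step ab aj).
Qed.

Lemma X_e e k : X e k e = 0%N.
Proof. by apply/eqP; rewrite sum_nat_eq0; apply/forallP => j; rewrite ball_e. Qed.

Lemma X_out e k v : v \notin ball e k -> X e k v = k.+1.
Proof.
move=> vk; rewrite /X (eq_bigr (fun _ => 1%N)) ?sum1_card ?card_ord // => j _.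
apply/eqP; rewrite eqb1; apply: contra vk; apply: (subsetP (ball_le e _)).
by rewrite -ltnS.
Qed.

Lemma nb_ball (R : realType) e k :
  consistent (fun v => (X e k v)%:R : R) h /\
  (nb_kdominated (fun v => (X e k v)%:R : R) k e < #|ball e k|)%N.
Proof.
split.
  move=> [a b] ab /=; rewrite lerBlDr addrC natr1 ler_nat; exact: X_edge.
rewrite /nb_kdominated [X in (_ < X)%N](cardsD1 e) ball_e add1n ltnS.
apply: subset_leq_card; apply/subsetP => y; rewrite !inE /kgreater => /andP [-> /=].
rewrite X_e lerBlDr add0r ler_nat; apply: contraLR => yk.
by rewrite X_out // -ltnNge.
Qed.
End Comb.

Section Count.
Variable n : nat.
Implicit Types (h : seq ('I_n * 'I_n)).

Lemma out_card h a : #|[set b | (a, b) \in h]| <= count (fun p => p.1 == a) h.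
Proof.
rewrite -size_filter -(size_map snd); apply: leq_trans (card_size _).
apply: subset_leq_card; apply/subsetP => b; rewrite inE => ab.
by apply/mapP; exists (a, b); rewrite // mem_filter /= eqxx.
Qed.

Lemma count1_deg h a : count (fun p => p.1 == a) h <= deg h a.
Proof. by apply: sub_count => p /= ->. Qed.

Definition S h T a := [set b | ((a, b) \in h) && (deg h b < T)].

Lemma S_card h T a : good h -> #|S h T a| <= T.
Proof.
elim: h => [|[a' b'] h IH] /=.
  by move=> _; rewrite (_ : S _ _ _ = set0) ?cards0 //; apply/setP => b; rewrite !inE.
case/andP => gd gh.
have degS v : deg ((a', b') :: h) v = ((a' == v) || (b' == v)) + deg h v by [].
case: (boolP ((a' == a) && (deg ((a', b') :: h) b' < T))) => [/andP [/eqP ea lt]|nc].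
  have : S ((a', b') :: h) T a \subset b' |: [set b | (a, b) \in h].
    apply/subsetP => b; rewrite !inE => /andP [/orP [/eqP [_ ->]|bh] _].
      by rewrite eqxx.
    by rewrite bh orbT.
  move/subset_leq_card => c; apply: leq_trans c _.
  have c1 := cardsU1 b' [set b | (a, b) \in h].
  have c2 := out_card h a.
  have c3 := count1_deg h a.
  have c4 := leq_b1 (b' \notin [set b | (a, b) \in h]).
  move: lt gd; rewrite degS eqxx orbT add1n => lt gd; subst a'.
  lia.
apply: leq_trans (IH gh); apply: subset_leq_card; apply/subsetP => b.
rewrite !inE => /andP [/orP [/eqP [e1 e2]|bh] lt].
  by move: nc lt; rewrite e1 e2 eqxx /= => /negP.
by rewrite bh /=; apply: leq_ltn_trans lt; rewrite degS leq_addl.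
Qed.

Lemma sum_eq1 (x : 'I_n) : \sum_(v : 'I_n) (x == v : nat) = 1.
Proof.
rewrite (bigD1 x) //= eqxx big1 // => v; rewrite eq_sym => /negbTE ->; by [].
Qed.

Lemma sum_deg h : \sum_(v : 'I_n) deg h v <= 2 * size h.
Proof.
elim: h => [|p h IH] /=; first by rewrite big1.
rewrite big_split /= mulnS; apply: leq_add => //.
apply: leq_trans (_ : \sum_(v : 'I_n) ((p.1 == v) + (p.2 == v)) <= 2).
  by apply: leq_sum => v _; case: (p.1 == v); case: (p.2 == v).
by rewrite big_split /= !sum_eq1.
Qed.

Definition H h T := [set v | T <= deg h v].

Lemma H_card h T : #|H h T| * T <= 2 * size h.
Proof.
apply: leq_trans (sum_deg h); rewrite -sum_nat_const big_mkcond /=.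
by apply: leq_sum => v _; rewrite inE; case: ifP.
Qed.

Lemma card_union_seq (F : 'I_n -> {set 'I_n}) (s : seq 'I_n) :
  #|[set b | has (fun a => b \in F a) s]| <= \sum_(a <- s) #|F a|.
Proof.
elim: s => [|a s IH] /=.
  by rewrite big_nil (_ : [set b | _] = set0) ?cards0 //; apply/setP => b; rewrite !inE.
rewrite big_cons (_ : [set b | _] = F a :|: [set b | has (fun a => b \in F a) s]).
  by rewrite cardsU; apply: leq_trans (leq_subr _ _) _; rewrite leq_add2l.
by apply/setP => b; rewrite !inE.
Qed.

Lemma card_union (F : 'I_n -> {set 'I_n}) (A : {set 'I_n}) :
  #|[set b | [exists a in A, b \in F a]]| <= \sum_(a in A) #|F a|.
Proof.
rewrite -big_enum; apply: leq_trans (card_union_seq F (enum A)).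
apply: subset_leq_card; apply/subsetP => b; rewrite !inE => /existsP [a /andP [aA bF]].
by apply/hasP; exists a; rewrite ?mem_enum.
Qed.

Lemma ball_rec h e j T : 0 < T -> good h ->
  T * #|ball h e j.+1| <= T * (T + 1) * #|ball h e j| + 2 * size h.
Proof.
move=> T0 gh.
have sub : ball h e j.+1 \subset
   (ball h e j :|: H h T) :|: [set b | [exists a in ball h e j, b \in S h T a]].
  apply/subsetP => b /=; rewrite !inE => /orP [->//|/existsP [a /andP [aj ab]]].
  case: (leqP T (deg h b)) => [le|lt]; first by apply/orP; left; apply/orP; right.
  by apply/orP; right; apply/existsP; exists a; rewrite !inE aj ab lt.
have c1 := subset_leq_card sub.
have c2 : #|[set b | [exists a in ball h e j, b \in S h T a]]| <= #|ball h e j| * T.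
  apply: leq_trans (card_union _ _) _; rewrite -sum_nat_const.
  by apply: leq_sum => a _; apply: S_card.
have c3 := H_card h T.
have : #|ball h e j.+1| <= #|ball h e j| + #|H h T| + #|ball h e j| * T.
  apply: leq_trans c1 _; apply: leq_trans (leq_card_setU _ _) _.
  apply: leq_add => //; exact: (leq_card_setU _ _).
move=> c4; nia.
Qed.

Lemma ball_sub h e j : ball h e j \subset e |: [set b in [seq p.2 | p <- h]].
Proof.
elim: j => [|j IH] /=; first by rewrite sub1set setU11.
rewrite subUset IH /=; apply/subsetP => b; rewrite !inE => /existsP [a /andP [_ ab]].
by apply/orP; right; apply/mapP; exists (a, b).
Qed.

Lemma ball_card_le h e j : #|ball h e j| <= (size h).+1.
Proof.
apply: leq_trans (subset_leq_card (ball_sub h e j)) _.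
rewrite cardsU1 cardsE -add1n; apply: leq_add; first exact: leq_b1.
by apply: leq_trans (card_size _) _; rewrite size_map.
Qed.

Lemma ball1_card h e : #|ball h e 1| <= (count (fun p => p.1 == e) h).+1.
Proof.
have : ball h e 1 \subset e |: [set b | (e, b) \in h].
  apply/subsetP => b /=; rewrite !inE => /orP [->//|/existsP [a /andP [ae ab]]].
  by move: ae; rewrite inE => /eqP ea; rewrite -ea ab orbT.
move/subset_leq_card => c; apply: leq_trans c _.
rewrite cardsU1 -add1n; apply: leq_add; first exact: leq_b1.
exact: out_card.
Qed.

Lemma sum_count (out : seq 'I_n) h : uniq out ->
  \sum_(e <- out) count (fun p => p.1 == e) h <= size h.
Proof.
move=> uo; elim: h => [|p h IH] /=; first by rewrite big1.
rewrite big_split /= -add1n; apply: leq_add IH.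
have -> : \sum_(e <- out) (p.1 == e : nat) = count_mem p.1 out.
  rewrite -sum1_count [RHS]big_mkcond /=; apply: eq_bigr => e _; rewrite eq_sym.
  by case: (_ == _).
by rewrite count_uniq_mem // leq_b1.
Qed.

Lemma sum_ball1 (out : seq 'I_n) h : uniq out ->
  \sum_(e <- out) #|ball h e 1| <= size out + size h.
Proof.
move=> uo; apply: leq_trans (_ : \sum_(e <- out) (1 + count (fun p => p.1 == e) h) <= _).
  by apply: leq_sum => e _; rewrite add1n; apply: ball1_card.
rewrite big_split /= sum1_size; rewrite leq_add2l; exact: sum_count.
Qed.

Lemma ball1_big h e k : 1 < #|ball h e k| -> 1 < #|ball h e 1|.
Proof.
move=> bk; rewrite ltnNge; apply/negP => b1.
have e1 : ball h e 1 = [set e].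
  apply/eqP; rewrite eq_sym eqEcard sub1set cards1 b1 andbT.
  exact: ball_e.
have all j : ball h e j = [set e].
  elim: j => [|j IH] //; transitivity (ball h e 1); last exact: e1.
  by rewrite /= IH.
by move: bk; rewrite all cards1.
Qed.

Lemma sum_rec (out : seq 'I_n) T (f g : 'I_n -> nat) c :
  (forall e, T * f e <= T * (T + 1) * g e + c) ->
  T * \sum_(e <- out) f e <= T * (T + 1) * \sum_(e <- out) g e + size out * c.
Proof.
move=> H; elim: out => [|e s IH]; first by rewrite !big_nil !muln0.
rewrite !big_cons /= mulnDr mulnDr mulSn.
have := H e; lia.
Qed.
End Count.

Section G.
Local Open Scope ring_scope.
Variable R : realType.

Lemma powle (x y : R) (k : nat) : (0 < k)%N -> 0 <= x -> 0 <= y -> x ^+ k <= y ^+ k -> x <= y.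
Proof. by move=> k0 x0 y0; rewrite (ler_pXn2r k0) // qualifE /=. Qed.

Lemma powle' (x y : R) (k : nat) : 0 <= x -> x <= y -> x ^+ k <= y ^+ k.
Proof. move=> x0 xy; apply: lerXn2r => //; rewrite qualifE /= //; exact: le_trans xy. Qed.

Lemma Gmain (m P0 : R) (b : nat -> R) (n : nat) :
  0 < m -> 0 < P0 -> (forall i, 0 <= b i) ->
  (forall i (T : nat), (0 < T)%N -> b i.+1 * T%:R <= b i * (T%:R + 1) * T%:R + 2 * m) ->
  b 0%N <= 32 * P0 -> (forall i, (i < n)%N -> 256 ^+ (2 ^ i) * P0 <= m) ->
  b n ^+ (2 ^ n) <= 32 ^+ (2 ^ n) * (m ^+ (2 ^ n - 1) * P0).
Proof.
move=> m0 P00 b0 rec base cond.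
pose P i := iter i (fun p => Num.sqrt (m * p)) P0.
have Ppos i : 0 < P i.
  elim: i => [|i IH] //=; rewrite sqrtr_gt0; exact: mulr_gt0.
have Psq i : P i.+1 ^+ 2 = m * P i.
  by rewrite /= sqr_sqrtr // mulr_ge0 // ?ltW.
have Ppow i : P i ^+ (2 ^ i) = m ^+ (2 ^ i - 1) * P0.
  elim: i => [|i IH]; first by rewrite expr1 subnn expr0 mul1r.
  rewrite expnS exprM Psq exprMn IH mulrA -exprD; congr (_ ^+ _ * _).
  have := expn_gt0 2 i; lia.
have cond' i : (i < n)%N -> 256 * P i <= m.
  move=> lin; have pi := expn_gt0 2 i.
  apply: (@powle _ _ (2 ^ i)) => //; first by rewrite mulr_ge0 ?ltW.
    exact: ltW.
  rewrite exprMn Ppow mulrCA.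
  have -> : m ^+ (2 ^ i) = m ^+ (2 ^ i - 1) * m.
    by rewrite -exprSr; congr (_ ^+ _); lia.
  rewrite ler_pM2l ?exprn_gt0 //; exact: cond.
have rho i : (i < n)%N -> 16 * P i <= P i.+1.
  move=> lin; apply: (@powle _ _ 2) => //; first by rewrite mulr_ge0 ?ltW.
    exact: ltW.
  rewrite Psq exprMn (_ : (16:R) ^+ 2 = 256); last by rewrite expr2; lra.
  rewrite expr2 mulrA ler_pM2r //; exact: cond'.
have claim i : (i <= n)%N -> b i <= 32 * P i.
  elim: i => [|i IH] lin //.
  have lt : (i < n)%N by [].
  have IH' := IH (ltnW lt).
  have Q16 := rho i lt.
  set Q := P i.+1 in Q16 *; set p := P i in IH' Q16 *.
  have p0 : 0 < p := Ppos i.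
  have mQ : Q ^+ 2 = m * p := Psq i.
  have x0 : 0 <= Q / (2 * p) by rewrite divr_ge0 // ?mulr_ge0 ?ltW ?(Ppos i.+1).
  have /andP [t1 t2] := truncn_itv x0.
  set t := Num.truncn _ in t1 t2.
  have ht1 : 2 * p * t%:R <= Q.
    by move: t1; rewrite ler_pdivlMr ?mulr_gt0 // => h; lra.
  have ht2 : Q < 2 * p * (t%:R + 1).
    by move: t2; rewrite ltr_pdivrMr ?mulr_gt0 // -natr1 => h; lra.
  have tpos : (0 < t)%N.
    rewrite lt0n; apply/negP => /eqP t0; move: ht2; rewrite t0 /= add0r mulr1.
    by move=> h; lra.
  have tr1 : 1 <= (t%:R : R) by rewrite ler1n.
  have h1 : m <= 4 * Q * t%:R.
    rewrite -(ler_pM2r p0) -mQ expr2.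
    have : Q <= 4 * p * t%:R by lra.
    move=> h; have Q0 : 0 <= Q by lra.
    have := ler_wpM2l Q0 h; lra.
  have h2 : 32 * p * t%:R * t%:R <= 16 * Q * t%:R.
    have t0 : 0 <= (t%:R : R) by lra.
    have := ler_wpM2l t0 ht1; lra.
  have h3 : 32 * p * t%:R <= 2 * Q * t%:R.
    have t0 : 0 <= (t%:R : R) by lra.
    have := ler_wpM2l t0 Q16; lra.
  have h4 := rec i t tpos.
  have h5 : b i * (t%:R + 1) * t%:R <= 32 * p * (t%:R + 1) * t%:R.
    by rewrite ler_pM2r ?ltr0n // ler_pM2r //; lra.
  have : b i.+1 * t%:R <= 32 * Q * t%:R by lra.
  by rewrite ler_pM2r // ltr0n.
have := claim n (leqnn n).
move=> c; apply: le_trans (powle' _ (b0 n) c) _.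
by rewrite exprMn Ppow.
Qed.
End G.

Section Parts.
Local Open Scope ring_scope.
Lemma sum_const_seq (T : Type) (s : seq T) (c : nat) : (\sum_(e <- s) c = size s * c)%N.
Proof. by elim: s => [|x s IH]; rewrite ?big_nil ?big_cons ?IH //= mulSn. Qed.

Lemma partI (R : realType) n (h : seq ('I_n * 'I_n)) (e : 'I_n) (q k : nat) :
  good h -> (0 < k)%N -> (0 < q)%N -> (q < #|ball h e k|)%N ->
  (q%:R : R) ^+ (2 ^ k) <= (1024 * (size h)%:R) ^+ (2 ^ k - 1).
Proof.
move=> gh k0 q0 qb.
set M := size h.
have qM : (q <= M)%N.
  by have := ball_card_le h e k; rewrite -/M; lia.
have k2 : (2 <= 2 ^ k)%N.
  by rewrite -{1}(expn1 2); apply: leq_pexp2l.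
suff Hn : (q ^ (2 ^ k) <= (1024 * M) ^ (2 ^ k - 1))%N.
  by move: Hn; rewrite -(ler_nat R) !natrX natrM.
case: (leqP (256 ^ (2 ^ (k - 1))) M) => hM.
  have G : (#|ball h e k|%:R : R) ^+ (2 ^ k) <= 32 ^+ (2 ^ k) * ((M%:R : R) ^+ (2 ^ k - 1) * 1).
    apply: (@Gmain R M%:R 1 (fun j => #|ball h e j|%:R) k).
    - by rewrite ltr0n; lia.
    - by [].
    - by move=> i.
    - move=> i T T0; have := ball_rec e i T0 gh.
      rewrite -(ler_nat R) !natrD !natrM => H; lra.
    - by rewrite /= cards1; lra.
    - move=> i lik; rewrite mulr1 -natrX ler_nat; apply: leq_trans hM.
      apply: leq_pexp2l => //; apply: leq_pexp2l => //; lia.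
  move: G; rewrite mulr1 -!natrX -natrM ler_nat => G.
  apply: (leq_trans (_ : _ <= #|ball h e k| ^ (2 ^ k))%N).
    by rewrite leq_exp2r //; lia.
  apply: (leq_trans G); rewrite expnMn leq_mul2r; apply/orP; right.
  rewrite (_ : 1024 = 32 ^ 2)%N // -expnM.
  by apply: leq_pexp2l => //; lia.
have e2 : (2 ^ k = (2 ^ k - 1).+1)%N by lia.
rewrite {1}e2 expnS mulnC expnMn.
apply: (@leq_trans (M ^ (2 ^ k - 1) * M)).
  by apply: leq_mul => //; rewrite leq_exp2r //; lia.
rewrite mulnC; apply: leq_mul => //.
apply: (leq_trans (ltnW hM)).
apply: (@leq_trans (256 ^ (2 ^ k - 1))).
  apply: leq_pexp2l => //.
  have : (2 ^ k = 2 * 2 ^ (k - 1))%N by rewrite -expnS subn1 prednK.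
  lia.
by rewrite leq_exp2r //; lia.
Qed.

Lemma partII (R : realType) n (h : seq ('I_n * 'I_n)) (out : seq 'I_n) (q k : nat) :
  good h -> uniq out -> (0 < k)%N -> (0 < size out)%N -> (0 < q)%N ->
  (forall e, e \in out -> (q < #|ball h e k|)%N) ->
  (q%:R : R) ^+ (2 ^ (k - 1)) * (size out)%:R <= (1024 * (size h)%:R) ^+ (2 ^ (k - 1)).
Proof.
move=> gh uo k0 r0 q0 F1.
set M := size h; set r := size out; set N := (2 ^ (k - 1))%N.
pose S j := (\sum_(e <- out) #|ball h e j|)%N.
have N0 : (0 < N)%N by rewrite expn_gt0.
have Sk : (r * q.+1 <= S k)%N.
  rewrite /S -sum_const_seq big_seq [X in (_ <= X)%N]big_seq.
  by apply: leq_sum => e eo; apply: F1.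
have S1u : (S 1 <= r + M)%N by apply: sum_ball1.
have S1l : (2 * r <= S 1)%N.
  rewrite mulnC -sum_const_seq /S big_seq [X in (_ <= X)%N]big_seq.
  apply: leq_sum => e eo; apply: (@ball1_big _ _ _ k).
  by have := F1 e eo; lia.
have rM : (r <= M)%N by lia.
have qM : (q <= M)%N.
  case: out uo F1 @r r0 {Sk S1u S1l rM S} => [//|e s] _ F1 _ _.
  have := F1 e (mem_head _ _); have := ball_card_le h e k; rewrite -/M; lia.
have M0 : (0 < M)%N by lia.
suff Hn : (q ^ N * r <= (1024 * M) ^ N)%N.
  by move: Hn; rewrite -(ler_nat R) natrM !natrX natrM.
case: (boolP ((k == 1%N) || (256 ^ (2 ^ (k - 2)) <= r)%N)) => hk.
  have rR : (0 : R) < r%:R by rewrite ltr0n.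
  have rR' : (r%:R : R) != 0 by rewrite lt0r_neq0.
  have G : ((S (k - 1).+1)%:R / r%:R : R) ^+ N <= 32 ^+ N * ((M%:R : R) ^+ (N - 1) * (M%:R / r%:R)).
    apply: (@Gmain R M%:R (M%:R / r%:R) (fun j => (S j.+1)%:R / r%:R) (k - 1)).
    - by rewrite ltr0n.
    - by rewrite divr_gt0 // ltr0n.
    - by move=> i; rewrite divr_ge0.
    - move=> i T T0.
      have := @sum_rec n out T (fun e => #|ball h e i.+2|) (fun e => #|ball h e i.+1|) (2 * M)
        (fun e => ball_rec e i.+1 T0 gh).
      rewrite -/r -(ler_nat R) !natrD !natrM => H.
      rewrite -(ler_pM2r rR).
      have -> : (S i.+2)%:R / r%:R * T%:R * r%:R = (S i.+2)%:R * T%:R :> R by field.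
      have -> : ((S i.+1)%:R / r%:R * (T%:R + 1) * T%:R + 2 * M%:R) * r%:R
          = (S i.+1)%:R * (T%:R + 1) * T%:R + r%:R * (2 * M%:R) :> R by field.
      rewrite /S; lra.
    - rewrite mulrA ler_pM2r ?invr_gt0 //.
      have : (S 1 <= 32 * M)%N by lia.
      by rewrite -(ler_nat R) natrM.
    - move=> i lik.
      have hr : (256 ^ (2 ^ i) <= r)%N.
        case/orP: hk => [/eqP k1|hk]; first by move: lik; rewrite k1.
        apply: leq_trans hk; apply: leq_pexp2l => //; apply: leq_pexp2l => //; lia.
      apply: (@le_trans _ _ (r%:R * (M%:R / r%:R))).
        by rewrite ler_pM2r ?divr_gt0 ?ltr0n // -natrX ler_nat.
      by rewrite mulrCA divff // mulr1.
  have kk : (k - 1).+1 = k by lia.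
  rewrite kk in G.
  have qS : (q%:R : R) <= (S k)%:R / r%:R.
    rewrite ler_pdivlMr // -natrM ler_nat; apply: leq_trans Sk; rewrite mulnC; lia.
  have G2 := le_trans (powle' N (ler0n R q) qS) G.
  have G3 : (q%:R : R) ^+ N * r%:R <= 32 ^+ N * (M%:R) ^+ N.
    have -> : (32 ^+ N * (M%:R) ^+ N : R) = 32 ^+ N * ((M%:R : R) ^+ (N - 1) * (M%:R / r%:R)) * r%:R.
      have eM : (M%:R : R) ^+ N = (M%:R : R) ^+ (N - 1) * M%:R.
        by rewrite -exprSr; congr (_ ^+ _); lia.
      rewrite eM; field; by rewrite pnatr_eq0 -lt0n.
    by apply: ler_wpM2r => //; exact: ltW.
  move: G3; rewrite -!natrX -!natrM ler_nat => G3.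
  apply: leq_trans G3 _; rewrite expnMn leq_mul2r; apply/orP; right.
  by rewrite leq_exp2r.
move: hk; rewrite negb_or => /andP [k1 hr]; rewrite -ltnNge in hr.
have k2 : (2 <= k)%N by move: k1 k0; lia.
apply: (@leq_trans (M ^ N * 16 ^ N)).
  apply: leq_mul; first by rewrite leq_exp2r.
  apply: ltnW; apply: leq_trans hr _.
  have -> : (16 ^ N = 256 ^ (2 ^ (k - 2)))%N.
    have e1 : (k - 1 = (k - 2).+1)%N by lia.
    by rewrite /N e1 expnS expnM.
  by [].
rewrite expnMn mulnC; apply: leq_mul => //; rewrite leq_exp2r //.
Qed.

End Parts.

Unset Implicit Arguments.
Local Open Scope ring_scope.

Theorem mainTheorem15 (R : realType) :
  exists c : R, 0 < c /\
  forall (n m r q k : nat) (t : ctree n),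
    (0 < k)%N -> (0 < r)%N ->
    (depth t <= m)%N ->
    guarantees R r q k t [::] ->
    c * Num.max (q%:R `^ (1 + ((2 ^ k - 1)%N%:R)^-1))
                (q%:R * r%:R `^ ((2 ^ (k - 1))%N%:R)^-1) <= m%:R.
Proof.
exists (1024^-1); split; first by rewrite invr_gt0.
move=> n m r q k t k0 r0 dm G.
have gn : good ([::] : seq ('I_n * 'I_n)) by [].
have [out [h [gh sh Hh]]] := adversary gn G.
rewrite /= addn0 in sh.
have hM : (size h <= m)%N := leq_trans sh dm.
have c0 : consistent (fun _ : 'I_n => 0 : R) h by move=> p _; rewrite subrr ler01.
have [so uo _] := Hh _ c0.
have N1pos : (0 < 2 ^ k - 1)%N.
  have : (2 <= 2 ^ k)%N by rewrite -{1}(expn1 2); apply: leq_pexp2l.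
  lia.
have N2pos : (0 < 2 ^ (k - 1))%N by rewrite expn_gt0.
have e1pos : (0 : R) < 1 + ((2 ^ k - 1)%N%:R)^-1.
  have : (0 : R) <= ((2 ^ k - 1)%N%:R)^-1 by rewrite invr_ge0 ler0n.
  lra.
case: (posnP q) => [q0|qpos].
  rewrite q0 mulr0n mul0r powR0; last by rewrite gt_eqF.
  by rewrite maxxx mulr0 ler0n.
have F1 : forall e, e \in out -> (q < #|ball h e k|)%N.
  move=> e eo; have [cx nb] := @nb_ball _ h R e k.
  have [_ _ H3] := Hh _ cx; exact: leq_ltn_trans (H3 e eo) nb.
have r0' : (0 < size out)%N by rewrite so.
have I2 := @partII R n h out q k gh uo k0 r0' qpos F1.
rewrite so in I2.
have [e0 e0o] : exists e0, e0 \in out.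
  by case: out r0' {so uo Hh F1 I2} => [|e s] //= _; exists e; rewrite mem_head.
have I1 := @partI R n h e0 q k gh k0 qpos (F1 e0 e0o).
have mR : (size h)%:R <= (m%:R : R) by rewrite ler_nat.
have m1024 : 0 <= 1024 * (size h)%:R :> R by rewrite mulr_ge0 ?ler0n.
have X1 : q%:R `^ (1 + ((2 ^ k - 1)%N%:R)^-1) <= 1024 * m%:R :> R.
  apply: (@powle _ _ _ (2 ^ k - 1)) => //.
  - exact: powR_ge0.
  - by rewrite mulr_ge0 ?ler0n.
  rewrite -powR_mulrn ?powR_ge0 // -powRrM.
  have -> : (1 + ((2 ^ k - 1)%N%:R)^-1) * (2 ^ k - 1)%N%:R = (2 ^ k)%N%:R :> R.
    have -> : (2 ^ k)%N%:R = (2 ^ k - 1)%N%:R + 1 :> R.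
      by rewrite natr1; congr (_%:R); lia.
    field; by rewrite pnatr_eq0 -lt0n.
  rewrite powR_mulrn ?ler0n //; apply: le_trans I1 _.
  by apply: powle' => //; rewrite ler_pM2l // ltr0n.
have X2 : q%:R * r%:R `^ ((2 ^ (k - 1))%N%:R)^-1 <= 1024 * m%:R :> R.
  apply: (@powle _ _ _ (2 ^ (k - 1))) => //.
  - by rewrite mulr_ge0 ?ler0n ?powR_ge0.
  - by rewrite mulr_ge0 ?ler0n.
  have eY : (q%:R * r%:R `^ ((2 ^ (k - 1))%N%:R)^-1) ^+ (2 ^ (k - 1)) = q%:R ^+ (2 ^ (k - 1)) * r%:R :> R.
    rewrite exprMn -[(r%:R `^ _) ^+ _]powR_mulrn ?powR_ge0 // -powRrM mulVf ?powRr1 ?ler0n //.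
    by rewrite pnatr_eq0 -lt0n.
  rewrite eY; apply: le_trans I2 _.
  by apply: powle' => //; rewrite ler_pM2l // ltr0n.
have H : Num.max (q%:R `^ (1 + ((2 ^ k - 1)%N%:R)^-1))
              (q%:R * r%:R `^ ((2 ^ (k - 1))%N%:R)^-1) <= 1024 * m%:R :> R.
  by rewrite ge_max X1 X2.
lra.
Qed.
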